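(* Let $n>1$ be odd and let $A\in\mathcal S^{(n-1)\times n}$ be distinguished. The following are equivalent: (1) there exists a homogeneous degree-one $x\in\mathbb Z_2[x_1,\dots,x_{n-1}]$ with $x^2+\mathfrak w^A_2\in\operatorname{span}\{\theta^A_1,\dots,\theta^A_n\}$; (2) $\sigma_2\in\operatorname{span}\{\theta^A_1-x_1^2,\dots,\theta^A_{n-1}-x_{n-1}^2,\theta^A_n\}$, where $\sigma_2=\sum_{1\le k<l\le n-1}x_kx_l$ is the elementary symmetric polynomial of degree 2; (3) there exists $S\in\mathcal P_n$ such that for every $U\in\mathcal P_{n-1}$ (i.e. $U\subseteq\{1,\dots,n-1\}$), $|(J_A(U)+U)\cap S|_2=\binom{|U|}{2}\bmod 2$.
   Context: $\mathcal S=\{0,1,2,3\}$ is the Klein four-group ($\mathbb Z_2$-vector space) with $x+x=0$, $1+2=3$, $1+3=2$, $2+3=1$. A $k\times n$ matrix ($k\le n$) over $\mathcal S$ is distinguished if $A_{ii}=1$ and $A_{ij}\in\{2,3\}$ for $i\ne j$. $\mathcal P_m$ is the power set of $\{1,\dots,m\}$ with $+$ the symmetric difference; $|U|_2=|U|\bmod2$. $J_A(U)=\{j:\sum_{i\in U}A_{ij}=1\}$. Let $\alpha,\beta:\mathcal S\to\mathbb Z_2$ be linear with $\alpha(2)=\beta(3)=1$, $\alpha(3)=\beta(2)=0$; $\alpha_j=\sum_{k=1}^{n-1}\alpha(A_{kj})x_k$, $\beta_j=\sum_{k}\beta(A_{kj})x_k$, $\theta^A_j=\alpha_j\beta_j$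 in $\mathbb Z_2[x_1,\dots,x_{n-1}]$; $\mathfrak w^A=\prod_{j=1}^n(1+\alpha_j+\beta_j)$ and $\mathfrak w^A_2$ is its degree-2 homogeneous part. *)

(* Defs.v *)
From HB Require Import structures.
From mathcomp Require Import all_boot all_order all_algebra.
From mathcomp Require Import mpoly.
Set Implicit Arguments. Unset Strict Implicit. Unset Printing Implicit Defensive.
Import Order.TTheory GRing.Theory.
Local Open Scope ring_scope.

(* The Klein four-group S = {0,1,2,3}, represented by 'I_4.  Writing
   k = 2*b1 + b0, addition is bitwise xor: 1+2=3, 1+3=2, 2+3=1, x+x=0. *)
Definition Kl := 'I_4.
Definition kadd (a b : Kl) : Kl :=
  inord ((odd a != odd b) + 2 * ((a %/ 2 != b %/ 2)%N : nat))%N.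
Definition k0 : Kl := inord 0.
Definition k1 : Kl := inord 1.
Definition k2 : Kl := inord 2.
Definition k3 : Kl := inord 3.

Definition distinguished (k n : nat) (A : 'M[Kl]_(k, n)) : Prop :=
  forall (i : 'I_k) (j : 'I_n),
    if val i == val j then A i j = k1 else (A i j = k2 \/ A i j = k3).

(* The linear maps alpha, beta : S -> Z_2 with alpha(2)=beta(3)=1,
   alpha(3)=beta(2)=0 (hence, by linearity, alpha(1)=beta(1)=1, and
   alpha(0)=beta(0)=0). *)
Definition kalpha (a : Kl) : 'F_2 := ((a == k1) || (a == k2))%:R.
Definition kbeta (a : Kl) : 'F_2 := ((a == k1) || (a == k3))%:R.

Section Defs.
Variable n : nat.
Notation P := {mpoly 'F_2[n.-1]}.
Variable A : 'M[Kl]_(n.-1, n).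

Definition alphaA (j : 'I_n) : P := \sum_(k < n.-1) kalpha (A k j) *: 'X_k.
Definition betaA (j : 'I_n) : P := \sum_(k < n.-1) kbeta (A k j) *: 'X_k.
Definition thetaA (j : 'I_n) : P := alphaA j * betaA j.

Definition wA : P := \prod_(j < n) (1 + alphaA j + betaA j).
Definition homog_part (d : nat) (p : P) : P :=
  \sum_(m <- msupp p | mdeg m == d) p@_m *: 'X_[m].
Definition w2A : P := homog_part 2 wA.

Definition JA (U : {set 'I_n.-1}) : {set 'I_n} :=
  [set j | \big[kadd/k0]_(i in U) A i j == k1].

End Defs.

Definition in_span (m k : nat) (f : 'I_k -> {mpoly 'F_2[m]}) (p : {mpoly 'F_2[m]}) : Prop :=
  exists c : 'I_k -> 'F_2, p = \sum_(j < k) c j *: f j.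

Definition theta_shift (n : nat) (A : 'M[Kl]_(n.-1, n)) (j : 'I_n) : {mpoly 'F_2[n.-1]} :=
  match (insub (val j) : option 'I_n.-1) with
  | Some k => thetaA A j - 'X_k ^+ 2
  | None => thetaA A j
  end.

Definition embedU (n : nat) (U : {set 'I_n.-1}) : {set 'I_n} :=
  [set widen_ord (leq_pred n) i | i in U].

(* symmetric difference, the sum of P_n *)
Definition symdiff (T : finType) (X Y : {set T}) : {set T} := (X :\: Y) :|: (Y :\: X).

(* Main.v *)
Require Import Defs.
From HB Require Import structures.
From mathcomp Require Import all_boot all_order all_algebra.
From mathcomp Require Import mpoly.
From mathcomp Require Import ring zify.
Import GRing.Theory.
Local Open Scope ring_scope.
Set Implicit Arguments. Unset Strict Implicit.

Lemma F2cases (x : 'F_2) : x = 0 \/ x = 1.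
Proof. case: x => [[|[|k]]] //= Hk; [left|right]; by apply/val_inj. Qed.
Lemma F2_11 : (1 + 1 : 'F_2) = 0.
Proof. by apply/val_inj. Qed.
Lemma F2_10 : (1 : 'F_2) != 0.
Proof. by apply/eqP => /(congr1 val). Qed.
Lemma F2add (x : 'F_2) : x + x = 0.
Proof. by have [->|->] := F2cases x; rewrite ?addr0 ?F2_11. Qed.
Lemma F2opp (x : 'F_2) : - x = x.
Proof. by apply: (addrI x); rewrite subrr F2add. Qed.
Lemma F2sq (x : 'F_2) : x * x = x.
Proof. by have [->|->] := F2cases x; rewrite ?mulr0 ?mulr1. Qed.
Lemma F2nat (k : nat) : (k%:R : 'F_2) = (odd k)%:R.
Proof.
elim: k => [|k IH] //; rewrite mulrS IH /=.
by case: (odd k) => /=; rewrite ?F2_11 ?addr0.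
Qed.
Lemma F2natb (b1 b2 : bool) : (b1%:R : 'F_2) = b2%:R -> b1 = b2.
Proof. by case: b1; case: b2 => // /eqP; rewrite ?F2_10 // eq_sym F2_10. Qed.

Lemma sum_delta (T : finType) (f : T -> 'F_2) a :
  \sum_c f c * (c == a)%:R = f a.
Proof.
rewrite (bigD1 a) //= eqxx mulr1 big1 ?addr0 // => c /negbTE ->.
by rewrite mulr0.
Qed.

Definition ind (T : finType) (U : {set T}) (k : T) : 'F_2 := (k \in U)%:R.

Lemma ind1 (T : finType) (a c : T) : ind [set a] c = (c == a)%:R.
Proof. by rewrite /ind in_set1. Qed.

Lemma ind2 (T : finType) (a b c : T) : a != b ->
  ind [set a; b] c = (c == a)%:R + (c == b)%:R.
Proof.
move=> ab; rewrite /ind in_set2.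
have [->|ca] := eqVneq c a; first by rewrite (negbTE ab) addr0.
by rewrite /= add0r.
Qed.

Lemma sum_ind2 (T : finType) (f : T -> 'F_2) a b : a != b ->
  \sum_c f c * ind [set a; b] c = f a + f b.
Proof.
move=> ab; under eq_bigr do rewrite ind2 // mulrDr.
by rewrite big_split /= !sum_delta.
Qed.

Lemma sum_ind1 (T : finType) (f : T -> 'F_2) a :
  \sum_c f c * ind [set a] c = f a.
Proof. under eq_bigr do rewrite ind1. by rewrite sum_delta. Qed.

Section Quad.
Variable m : nat.
Notation P := {mpoly 'F_2[m]}.

Definition ev (U : {set 'I_m}) (p : P) : 'F_2 := meval (ind U) p.

Definition Q (N : 'I_m -> 'I_m -> 'F_2) : P :=
  \sum_(a < m) \sum_(b < m) N a b *: ('X_a * 'X_b).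

Definition lin (f : 'I_m -> 'F_2) : P := \sum_(a < m) f a *: 'X_a.

Lemma evQ U N : ev U (Q N) =
  \sum_a (\sum_b N a b * ind U b) * ind U a.
Proof.
rewrite /ev /Q raddf_sum /=; apply: eq_bigr => a _; rewrite raddf_sum /= mulr_suml.
apply: eq_bigr => b _; rewrite mevalZ mevalM !mevalXU.
by rewrite -!mulrA [ind U a * _]mulrC.
Qed.

Lemma evQ1 N a : ev [set a] (Q N) = N a a.
Proof. by rewrite evQ; under eq_bigr do rewrite sum_ind1; rewrite sum_ind1. Qed.

Lemma evQ2 N a b : a != b -> ev [set a; b] (Q N) = N a a + N a b + N b a + N b b.
Proof.
move=> ab; rewrite evQ; under eq_bigr do rewrite sum_ind2 //.
by rewrite sum_ind2 // addrA.
Qed.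

Lemma evlin U f : ev U (lin f) = \sum_a f a * ind U a.
Proof.
rewrite /ev /lin raddf_sum /=; apply: eq_bigr => a _.
by rewrite mevalZ mevalXU.
Qed.

Lemma lin_mul f g : lin f * lin g = Q (fun a b => f a * g b).
Proof.
rewrite /lin /Q mulr_suml; apply: eq_bigr => a _.
rewrite mulr_sumr; apply: eq_bigr => b _.
by rewrite -scalerAl -scalerAr scalerA.
Qed.

Lemma Xlin k : 'X_k = lin (fun a => (a == k)%:R) :> P.
Proof.
rewrite /lin (bigD1 k) //= eqxx scale1r big1 ?addr0 // => a /negbTE ->.
by rewrite scale0r.
Qed.

Lemma QD N1 N2 : Q N1 + Q N2 = Q (fun a b => N1 a b + N2 a b).
Proof.
rewrite /Q -big_split; apply: eq_bigr => a _; rewrite -big_split.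
by apply: eq_bigr => b _; rewrite scalerDl.
Qed.

Lemma QZ c N : c *: Q N = Q (fun a b => c * N a b).
Proof.
rewrite /Q scaler_sumr; apply: eq_bigr => a _; rewrite scaler_sumr.
by apply: eq_bigr => b _; rewrite scalerA.
Qed.

Lemma Q0 : Q (fun _ _ => 0) = 0.
Proof. by rewrite /Q big1 // => a _; rewrite big1 // => b _; rewrite scale0r. Qed.

Lemma polyF2add (p : P) : p + p = 0.
Proof. by rewrite -{1 2}[p]scale1r -scalerDl F2_11 scale0r. Qed.

Lemma Qzero N : (forall a, N a a = 0) -> (forall a b, N a b = N b a) -> Q N = 0.
Proof.
move=> Nd Ns.
pose F a b : P := N a b *: ('X_a * 'X_b).
have Fd a : F a a = 0 by rewrite /F Nd scale0r.
have Fs a b : F a b = F b a by rewrite /F Ns mulrC.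
have E1 a : \sum_(b < m) F a b = \sum_(b < m) (if (a < b)%N then F a b else 0) +
                           \sum_(b < m) (if (b < a)%N then F a b else 0).
  rewrite -big_split; apply: eq_bigr => b _ /=.
  case: (ltngtP a b) => [ab|ba|/val_inj ->]; rewrite ?addr0 ?add0r //.
rewrite /Q (eq_bigr _ (fun a _ => E1 a)) big_split /=.
rewrite [X in _ + X]exchange_big /=.
rewrite [X in _ + X](eq_bigr (fun a : 'I_m => \sum_(b < m) (if (a < b)%N then F a b else 0))).
  by rewrite polyF2add.
move=> a _; apply: eq_bigr => b _; by rewrite Fs.
Qed.

Lemma QE N1 N2 : (forall a, N1 a a = N2 a a) ->
  (forall a b, a != b -> N1 a b + N1 b a = N2 a b + N2 b a) -> Q N1 = Q N2.
Proof.
move=> Hd Hs; apply/eqP; rewrite -subr_eq0 -scaleN1r QZ QD; apply/eqP/Qzero.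
  by move=> a; rewrite Hd F2opp mul1r F2add.
move=> a b; rewrite !F2opp !mul1r.
have [->//|ab] := eqVneq a b.
apply/eqP; rewrite -subr_eq0 F2opp; apply/eqP.
have -> : N1 a b + N2 a b + (N1 b a + N2 b a) = (N1 a b + N1 b a) + (N2 a b + N2 b a) by ring.
by rewrite Hs // F2add.
Qed.

Definition isQ (p : P) := exists N, p = Q N.

Lemma isQD p q : isQ p -> isQ q -> isQ (p + q).
Proof. by move=> [N1 ->] [N2 ->]; rewrite QD; eexists. Qed.
Lemma isQZ c p : isQ p -> isQ (c *: p).
Proof. by move=> [N1 ->]; rewrite QZ; eexists. Qed.

Lemma mdeg2P (mm : 'X_{1..m}) : mdeg mm = 2%N -> exists a b, mm = (U_(a) + U_(b))%MM.
Proof.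
move=> H.
case: (pickP (fun i => (0 < mm i)%N)) => [i Hi|H0]; last first.
  by move: H; rewrite mdegE big1 // => i _; move: (H0 i); rewrite lt0n => /negbFE /eqP.
pose mm' := [multinom (mm j - (i == j))%N | j < m].
have E : mm = (U_(i) + mm')%MM.
  apply/mnmP => j; rewrite mnmDE mnm1E mnmE.
  have [<-|] := eqVneq i j; last by rewrite add0n subn0.
  by rewrite add1n subn1 prednK.
have : mdeg mm' = 1%N by move: H; rewrite E mdegD mdeg1 add1n => -[].
move=> /eqP /mdeg1P [k /eqP Hk]; exists i, k; by rewrite E Hk.
Qed.

Lemma hom2Q (p : P) : p \is 2.-homog -> isQ p.
Proof.
move=> /dhomogP Hp; rewrite (mpolyE p) big_seq.
apply: big_ind => //.
- by exists (fun _ _ => 0); rewrite Q0.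
- exact: isQD.
move=> mm /Hp /mdeg2P [a [b ->]]; apply: isQZ.
rewrite mpolyXD !Xlin lin_mul; eexists; reflexivity.
Qed.

Lemma DET (p q : P) : p \is 2.-homog -> q \is 2.-homog ->
  (forall a, ev [set a] p = ev [set a] q) ->
  (forall a b, a != b -> ev [set a; b] p = ev [set a; b] q) -> p = q.
Proof.
move=> /hom2Q [N1 ->] /hom2Q [N2 ->] H1 H2; apply: QE.
  by move=> a; move: (H1 a); rewrite !evQ1.
move=> a b ab; move: (H2 a b ab) (H1 a) (H1 b); rewrite !evQ2 // !evQ1 => E Ea Eb.
move: E; rewrite Ea Eb => /eqP; rewrite -!addrA !(addrC (N2 a a)) -!addrA.
rewrite !(addrC (N2 b b)) !addrA.
by move=> /eqP /addIr /addIr.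
Qed.

End Quad.

Section Gen.
Variable m : nat.
Notation P := {mpoly 'F_2[m]}.

Lemma pihomogM (p q : P) e d : q \is e.-homog ->
  pihomog mdeg d (p * q) = if (e <= d)%N then pihomog mdeg (d - e) p * q else 0.
Proof.
move=> Hq.
set K := maxn (mmeasure mdeg p) d.+1.
have HK : (mmeasure mdeg p <= K)%N := leq_maxl _ _.
rewrite {1}(pihomog_partitionE HK) mulr_suml raddf_sum /=.
have E (i : 'I_K) : pihomog mdeg d (pihomog mdeg i p * q) =
    if (i + e == d)%N then pihomog mdeg i p * q else 0.
  have H := dhomogM (pihomogP mdeg i p) Hq.
  case: eqP => [<-|/eqP ne]; first exact: pihomog_dE.
  exact: pihomog_ne0 ne H.
rewrite (eq_bigr _ (fun i _ => E i)).
case: leqP => [ed|de].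
  have lt : (d - e < K)%N by rewrite leq_max ltnS leq_subr orbT.
  rewrite (bigD1 (Ordinal lt)) //= subnK // eqxx big1 ?addr0 // => i ne.
  case: eqP => // Hi; exfalso; move: ne => /eqP; apply; apply/val_inj => /=; lia.
by rewrite big1 // => i _; case: eqP => // Hi; lia.
Qed.

Lemma pihomog1 d : pihomog mdeg d (1 : P) = if d == 0%N then 1 else 0.
Proof.
case: eqP => [->|/eqP ne]; first exact/pihomog_dE/dhomog1.
by apply: pihomog_ne0; [rewrite eq_sym|exact: dhomog1].
Qed.

Variable L : nat -> P.
Hypothesis HL : forall j, L j \is 1.-homog.

Definition Wp k := \prod_(0 <= j < k) (1 + L j).

Lemma Wrec k :
  [/\ pihomog mdeg 0 (Wp k) = 1,
      pihomog mdeg 1 (Wp k) = \sum_(0 <= j < k) L j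
    & pihomog mdeg 2 (Wp k) = \sum_(0 <= j < k) (\sum_(0 <= i < j) L i) * L j].
Proof.
elim: k => [|k [H0 H1 H2]].
  by rewrite /Wp !big_geq // !pihomog1.
rewrite /Wp !big_nat_recr //= -/(Wp k) mulrDr mulr1 !raddfD /= !(pihomogM _ _ (HL k)) /=.
by rewrite H0 H1 H2 mul1r addr0.
Qed.

End Gen.

Definition EE (k : nat) (w : nat -> 'F_2) :=
  \sum_(0 <= j < k) (\sum_(0 <= i < j) w i) * w j.

Lemma eq_EE k w1 w2 : (forall j, w1 j = w2 j) -> EE k w1 = EE k w2.
Proof.
move=> H; rewrite /EE; apply: eq_bigr => j _; rewrite H; congr (_ * _).
by apply: eq_bigr => i _.
Qed.

Lemma EEbil k u v : EE k (fun j => u j + v j) = EE k u + EE k v +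
  (\sum_(0 <= j < k) u j) * (\sum_(0 <= j < k) v j) - \sum_(0 <= j < k) u j * v j.
Proof.
rewrite /EE; elim: k => [|k IH]; first by rewrite !big_geq // !mulr0 !addr0 subr0.
rewrite !big_nat_recr //= IH big_split /=; ring.
Qed.

Lemma sum_eqn (a k : nat) : \sum_(0 <= j < k) ((a == j)%:R : 'F_2) = (a < k)%:R.
Proof.
elim: k => [|k IH]; first by rewrite big_geq.
rewrite big_nat_recr //= IH ltnS.
by case: (ltngtP a k) => //= _; rewrite ?addr0 ?add0r.
Qed.

Lemma sum_neqn (a k : nat) : \sum_(0 <= j < k) ((a != j)%:R : 'F_2) = k%:R - (a < k)%:R.
Proof.
have -> : (k%:R : 'F_2) = \sum_(0 <= j < k) (1 : 'F_2) by rewrite sumr_const_nat subn0.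
rewrite -sum_eqn.
rewrite -sumrB; apply: eq_bigr => j _.
by case: eqP => _; rewrite /= ?subr0 ?subrr ?sub0r ?oppr0.
Qed.

Lemma sum_neqn2 (a b k : nat) : a != b ->
  \sum_(0 <= j < k) ((a != j)%:R * (b != j)%:R : 'F_2) = k%:R - (a < k)%:R - (b < k)%:R.
Proof.
move=> ab.
have -> : (k%:R : 'F_2) = \sum_(0 <= j < k) (1 : 'F_2) by rewrite sumr_const_nat subn0.
rewrite -!sum_eqn.
rewrite -!sumrB; apply: eq_bigr => j _.
case Ha: (a == j); case Hb: (b == j) => /=.
- by move/eqP: Ha => Ha; move/eqP: Hb => Hb; rewrite Ha Hb eqxx in ab.
- by rewrite mul0r subr0 subrr.
- by rewrite mulr0 subr0 subrr.
- by rewrite mulr1 !subr0.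
Qed.

Section Gen2.
Variable m : nat.
Notation P := {mpoly 'F_2[m]}.

Lemma prod_ind (U h : {set 'I_m}) :
  \prod_(i < m) ind U i ^+ (i \in h) = (h \subset U)%:R.
Proof.
case: (boolP (h \subset U)) => [sub|/subsetPn [i hi niU]].
  apply: big1 => i _; case: (boolP (i \in h)) => hi /=; last by rewrite expr0.
  by rewrite expr1 /ind (subsetP sub i hi).
by rewrite (bigD1 i) //= hi expr1 /ind (negbTE niU) mul0r.
Qed.

Lemma ev_sum I r (Pr : pred I) (F : I -> P) U :
  ev U (\sum_(i <- r | Pr i) F i) = \sum_(i <- r | Pr i) ev U (F i).
Proof. exact: raddf_sum. Qed.
Lemma evX U mm : ev U 'X_[mm] = \prod_(i < m) ind U i ^+ mm i.
Proof. exact: mevalX. Qed.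
Lemma evZ U c (p : P) : ev U (c *: p) = c * ev U p.
Proof. exact: mevalZ. Qed.
Lemma evM U (p q : P) : ev U (p * q) = ev U p * ev U q.
Proof. exact: mevalM. Qed.
Lemma evD U (p q : P) : ev U (p + q) = ev U p + ev U q.
Proof. exact: mevalD. Qed.
Lemma evB U (p q : P) : ev U (p - q) = ev U p - ev U q.
Proof. exact: mevalB. Qed.

Lemma ev_mesym (U : {set 'I_m}) : ev U (mesym m 'F_2 2) = 'C(#|U|, 2)%:R.
Proof.
rewrite mesymE ev_sum.
under eq_bigr do rewrite evX.
have H h : \prod_(i < m) ind U i ^+ mesym1 h i = (h \subset U)%:R.
  by rewrite -prod_ind; apply: eq_bigr => i _; rewrite /mesym1 mnmE.
under eq_bigr do rewrite H.
rewrite -cards_draws -sumr_const [RHS]big_mkcond [LHS]big_mkcond.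
apply: eq_bigr => h _; rewrite inE andbC.
by case: (#|h| == 2)%N; case: (h \subset U).
Qed.

Lemma mesym_hom : mesym m 'F_2 2 \is 2.-homog.
Proof.
rewrite mesymE; apply: rpred_sum => h /eqP Hh.
by rewrite dhomogX /= mdeg_mesym1 Hh.
Qed.

Lemma lin_hom (f : 'I_m -> 'F_2) : lin f \is 1.-homog.
Proof.
apply: rpred_sum => a _; apply: rpredZ.
by rewrite dhomogX /= mdeg1.
Qed.

Lemma mnm1_eq (a k : 'I_m) : (U_(a) == U_(k))%MM = (a == k).
Proof.
apply/eqP/eqP => [H|->] //.
by move: (congr1 (fun mm : 'X_{1..m} => mm a) H); rewrite !mnm1E eqxx; case: eqP.
Qed.

Lemma hom1lin (x : P) : x \is 1.-homog -> x = lin (fun a => x@_U_(a)).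
Proof.
move=> Hx; apply/mpolyP => mm.
rewrite /lin raddf_sum /=.
under eq_bigr do rewrite mcoeffZ mcoeffX.
case: (boolP (mdeg mm == 1%N)) => [/mdeg1P [k /eqP ->]|nd].
  under eq_bigr do rewrite mnm1_eq.
  by rewrite sum_delta.
rewrite (dhomog_nemf_coeff Hx nd) big1 // => a _.
case: eqP => [E|]; last by rewrite mulr0.
by move: nd; rewrite -E mdeg1.
Qed.

Lemma ev_lin2 (f : 'I_m -> 'F_2) a b : a != b -> ev [set a; b] (lin f) = ev [set a] (lin f) + ev [set b] (lin f).
Proof. by move=> ab; rewrite !evlin sum_ind2 // !sum_ind1. Qed.

Lemma ev_sq U (x : P) : ev U (x ^+ 2) = ev U x.
Proof. by rewrite /ev rmorphXn /= expr2 F2sq. Qed.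

Lemma sum_indZ (T : finType) (Z : {set T}) : \sum_j ind Z j = #|Z|%:R.
Proof.
rewrite -sumr_const [RHS]big_mkcond; apply: eq_bigr => j _.
by rewrite /ind; case: (j \in Z).
Qed.

End Gen2.

Lemma kalphaE (a : Kl) : kalpha a = ((val a == 1%N) || (val a == 2%N))%:R.
Proof. by rewrite /kalpha /k1 /k2 -!val_eqE /= !inordK. Qed.
Lemma kbetaE (a : Kl) : kbeta a = ((val a == 1%N) || (val a == 3%N))%:R.
Proof. by rewrite /kbeta /k1 /k3 -!val_eqE /= !inordK. Qed.
Lemma kaddE (a b : Kl) : val (kadd a b) = ((odd a != odd b) + 2 * ((a %/ 2 != b %/ 2)%N : nat))%N.
Proof.
rewrite /kadd /= inordK //; case: (odd a != odd b); case: (_ != _) => //.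
Qed.
Lemma kalphaD (x y : Kl) : kalpha (kadd x y) = kalpha x + kalpha y.
Proof.
rewrite !kalphaE kaddE.
case: x => [[|[|[|[|x]]]] Hx] //; case: y => [[|[|[|[|y]]]] Hy] //=;
  rewrite ?add0r ?addr0 ?F2_11 //.
Qed.
Lemma kbetaD (x y : Kl) : kbeta (kadd x y) = kbeta x + kbeta y.
Proof.
rewrite !kbetaE kaddE.
case: x => [[|[|[|[|x]]]] Hx] //; case: y => [[|[|[|[|y]]]] Hy] //=;
  rewrite ?add0r ?addr0 ?F2_11 //.
Qed.
Lemma kab (x : Kl) : kalpha x * kbeta x = (x == k1)%:R.
Proof.
rewrite kalphaE kbetaE /k1 -val_eqE /= inordK //.
case: x => [[|[|[|[|x]]]] Hx] //=; rewrite ?mul0r ?mulr0 ?mulr1 //.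
Qed.
Lemma kalpha0 : kalpha k0 = 0.
Proof. by rewrite kalphaE /k0 /= inordK. Qed.
Lemma kbeta0 : kbeta k0 = 0.
Proof. by rewrite kbetaE /k0 /= inordK. Qed.
Lemma kabsum (x : Kl) : x = k2 \/ x = k3 -> kalpha x + kbeta x = 1.
Proof.
by case=> ->; rewrite kalphaE kbetaE /k2 /k3 /= !inordK //= ?addr0 ?add0r.
Qed.
Lemma kabsum1 : kalpha k1 + kbeta k1 = 0.
Proof. by rewrite kalphaE kbetaE /k1 /= !inordK //= F2_11. Qed.
Lemma k1_23 (x : Kl) : x = k2 \/ x = k3 -> x != k1.
Proof. by case=> ->; rewrite /k1 /k2 /k3 -val_eqE /= !inordK. Qed.

Lemma sum_in (T : finType) (f : T -> 'F_2) U : \sum_k f k * ind U k = \sum_(k in U) f k.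
Proof.
rewrite [RHS]big_mkcond; apply: eq_bigr => k _; rewrite /ind.
by case: (k \in U); rewrite ?mulr1 ?mulr0.
Qed.

Lemma lin_add m (f g : 'I_m -> 'F_2) : lin f + lin g = lin (fun a => f a + g a).
Proof. by rewrite /lin -big_split; apply: eq_bigr => a _; rewrite scalerDl. Qed.

Lemma lin_eq m (f g : 'I_m -> 'F_2) : (forall a, f a = g a) -> lin f = lin g.
Proof. by move=> H; rewrite /lin; apply: eq_bigr => a _; rewrite H. Qed.

Section Prob.
Variable n : nat.
Variable A : 'M[Kl]_(n.-1, n).
Hypothesis hA : distinguished A.
Notation m := n.-1.
Notation P := {mpoly 'F_2[n.-1]}.

Lemma distk1 (a : 'I_m) (j : 'I_n) : (A a j == k1) = (val a == val j).
Proof.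
move: (hA a j); case: eqP => [_ ->|_ /k1_23 /negbTE //]; by rewrite eqxx.
Qed.

Lemma ev_alpha U j : ev U (alphaA A j) = kalpha (\big[kadd/k0]_(i in U) A i j).
Proof.
rewrite (big_morph kalpha kalphaD kalpha0) -sum_in.
exact: (evlin U (fun k => kalpha (A k j))).
Qed.

Lemma ev_beta U j : ev U (betaA A j) = kbeta (\big[kadd/k0]_(i in U) A i j).
Proof.
rewrite (big_morph kbeta kbetaD kbeta0) -sum_in.
exact: (evlin U (fun k => kbeta (A k j))).
Qed.

Lemma ev_theta U j : ev U (thetaA A j) = ind (JA A U) j.
Proof. by rewrite /thetaA evM ev_alpha ev_beta kab /ind /JA inE. Qed.

Lemma embed1 (a : 'I_m) : embedU [set a] = [set widen_ord (leq_pred n) a].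
Proof. exact: imset_set1. Qed.

Lemma JA1 (a : 'I_m) j : ind (JA A [set a]) j = ind (embedU [set a]) j.
Proof.
rewrite -ev_theta /thetaA evM.
rewrite (evlin _ (fun k => kalpha (A k j))) (evlin _ (fun k => kbeta (A k j))).
rewrite !sum_ind1 kab distk1 embed1 ind1.
by rewrite -val_eqE /= eq_sym.
Qed.

Lemma embed2 (a b : 'I_m) j : a != b ->
  ind (embedU [set a; b]) j = ind (embedU [set a]) j + ind (embedU [set b]) j.
Proof.
move=> ab; rewrite !embed1 /embedU imsetU1 imset_set1 ind2 ?ind1 //.
Qed.

Lemma ev_tsh U j : ev U (theta_shift A j) = ind (JA A U) j - ind (embedU U) j.
Proof.
rewrite /theta_shift; case: insubP => [k _ kj|nj] /=.
  rewrite evB ev_theta ev_sq Xlin evlin.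
  under eq_bigr do rewrite mulrC.
  rewrite sum_delta; congr (_ - _).
  have -> : j = widen_ord (leq_pred n) k by apply/val_inj.
  rewrite /ind /embedU mem_imset // => x y /(congr1 val) /= xy; exact: val_inj.
rewrite ev_theta.
suff -> : ind (embedU U) j = 0 by rewrite subr0.
rewrite /ind; case: imsetP => // -[i _ Hi].
by move: nj; rewrite Hi /= ltn_ord.
Qed.

Definition Lp (j : nat) : P := lin (fun k : 'I_m => (val k != j)%:R).

Lemma Lp_hom j : Lp j \is 1.-homog.
Proof. exact: lin_hom. Qed.

Lemma wAE : wA A = Wp Lp n.
Proof.
rewrite /wA /Wp big_mkord; apply: eq_bigr => j _.
rewrite -addrA; congr (_ + _).
rewrite /alphaA /betaA -[\sum_(k < _) _ *: 'X_k]/(lin _) -[\sum_(k < _) kbeta _ *: 'X_k]/(lin _).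
rewrite lin_add; apply: lin_eq => k.
move: (hA k j); case: eqP => [E ->|ne /kabsum ->] //.
by rewrite kabsum1.
Qed.

Lemma ev_w2 U : ev U (w2A A) = EE n (fun j => ev U (Lp j)).
Proof.
rewrite /w2A -[homog_part 2 _]/(pihomog mdeg 2 _) wAE.
have [_ _ ->] := Wrec Lp_hom n.
rewrite ev_sum; apply: eq_bigr => j _; rewrite evM ev_sum; congr (_ * _).
Qed.

Lemma KI (a b : 'I_m) : odd n -> a != b ->
  ev [set a; b] (w2A A) = ev [set a] (w2A A) + ev [set b] (w2A A) + 1.
Proof.
move=> hodd ab; rewrite !ev_w2.
rewrite (@eq_EE n (fun j => ev [set a; b] (Lp j))
   (fun j => (val a != j)%:R + (val b != j)%:R)); last first.
  by move=> j; rewrite evlin sum_ind2.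
rewrite (@eq_EE n (fun j => ev [set a] (Lp j)) (fun j => (val a != j)%:R)); last first.
  by move=> j; rewrite evlin sum_ind1.
rewrite (@eq_EE n (fun j => ev [set b] (Lp j)) (fun j => (val b != j)%:R)); last first.
  by move=> j; rewrite evlin sum_ind1.
have an : (val a < n)%N by apply: (leq_trans (ltn_ord a)); exact: leq_pred.
have bn : (val b < n)%N by apply: (leq_trans (ltn_ord b)); exact: leq_pred.
rewrite EEbil !sum_neqn sum_neqn2; last by rewrite val_eqE.
rewrite an bn F2nat hodd subrr mul0r addr0.
by rewrite sub0r opprK.
Qed.


End Prob.

Lemma F2_01 : ((0 : 'F_2) == 1) = false.
Proof. by rewrite eq_sym; apply/negbTE/F2_10. Qed.

Section Prob2.
Variable n : nat.
Variable A : 'M[Kl]_(n.-1, n).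
Hypothesis hA : distinguished A.
Hypothesis hodd : odd n.
Notation m := n.-1.
Notation P := {mpoly 'F_2[n.-1]}.

Lemma theta_hom j : thetaA A j \is 2.-homog.
Proof. exact: (dhomogM (lin_hom (fun k => kalpha (A k j))) (lin_hom (fun k => kbeta (A k j)))). Qed.

Lemma tsh_hom j : theta_shift A j \is 2.-homog.
Proof.
rewrite /theta_shift; case: insubP => [k _ _|_] /=; last exact: theta_hom.
apply: rpredB; first exact: theta_hom.
have Xk : ('X_k : P) \is 1.-homog by rewrite dhomogX /= mdeg1.
exact: (dhomogMn 2 Xk).
Qed.

Lemma span_hom (f : 'I_n -> P) c : (forall j, f j \is 2.-homog) ->
  \sum_j c j *: f j \is 2.-homog.
Proof. by move=> Hf; apply: rpred_sum => j _; apply: rpredZ. Qed.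

Lemma evspan U (f : 'I_n -> P) c : ev U (\sum_j c j *: f j) = \sum_j c j * ev U (f j).
Proof. by rewrite ev_sum; apply: eq_bigr => j _; rewrite evZ. Qed.

Lemma I12 (x : P) c : x \is 1.-homog ->
  x ^+ 2 + w2A A = \sum_j c j *: thetaA A j ->
  mesym m 'F_2 2 = \sum_j c j *: theta_shift A j.
Proof.
move=> Hx Hc.
have HU U : \sum_j c j * ind (JA A U) j = ev U x + ev U (w2A A).
  rewrite -(ev_sq U x) -evD Hc evspan; apply: eq_bigr => j _; by rewrite ev_theta.
have HE (a : 'I_m) : \sum_j c j * ind (embedU [set a]) j = ev [set a] x + ev [set a] (w2A A).
  by rewrite -HU; apply: eq_bigr => j _; rewrite JA1.
apply: DET.
- exact: mesym_hom.
- exact: span_hom tsh_hom.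
- move=> a; rewrite ev_mesym cards1 bin_small // evspan big1 // => j _.
  by rewrite ev_tsh JA1 // subrr mulr0.
move=> a b ab; rewrite ev_mesym cards2 ab /= evspan.
under eq_bigr do rewrite ev_tsh mulrBr embed2 // mulrDr.
rewrite sumrB big_split /= HU !HE KI // (hom1lin Hx) ev_lin2 //.
rewrite binn; ring.
Qed.

Lemma I21 c : mesym m 'F_2 2 = \sum_j c j *: theta_shift A j ->
  exists x : P, x \is 1.-homog /\ in_span (thetaA A) (x ^+ 2 + w2A A).
Proof.
move=> Hc.
pose f (a : 'I_m) := c (widen_ord (leq_pred n) a) + ev [set a] (w2A A).
exists (lin f); split; first exact: lin_hom.
exists c.
have HU U : \sum_j c j * ind (JA A U) j =
    ev U (mesym m 'F_2 2) + \sum_j c j * ind (embedU U) j.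
  rewrite Hc evspan -big_split; apply: eq_bigr => j _.
  rewrite ev_tsh.
  change (c j * ind (JA A U) j = c j * (ind (JA A U) j - ind (embedU U) j) + c j * ind (embedU U) j).
  by rewrite -mulrDr subrK.
have HE (a : 'I_m) : \sum_j c j * ind (embedU [set a]) j = c (widen_ord (leq_pred n) a).
  rewrite embed1; under eq_bigr do rewrite ind1.
  by rewrite sum_delta.
apply: DET.
- apply: rpredD; first exact: (dhomogMn 2 (lin_hom f)).
  exact: (pihomogP mdeg 2 (wA A)).
- exact: span_hom theta_hom.
- move=> a; rewrite evD ev_sq evlin sum_ind1 /f evspan.
  under eq_bigr do rewrite ev_theta.
  by rewrite HU ev_mesym cards1 bin_small // add0r HE -addrA F2add addr0.
move=> a b ab; rewrite evD ev_sq evlin sum_ind2 // /f evspan.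
under eq_bigr do rewrite ev_theta.
rewrite HU ev_mesym cards2 ab binn.
under eq_bigr do rewrite embed2 // mulrDr.
rewrite big_split /= !HE KI //.
set ca := c _; set cb := c _; set wa := ev [set a] _; set wb := ev [set b] _.
transitivity ((ca + cb + 1) + (wa + wa) + (wb + wb)); first ring.
by rewrite !F2add !addr0 [RHS]addrC.
Qed.

Lemma tsh_ind U (S : {set 'I_n}) j :
  ind S j * (ind (JA A U) j - ind (embedU U) j) =
  ind (symdiff (JA A U) (embedU U) :&: S) j.
Proof.
rewrite /ind /symdiff in_setI in_setU !in_setD.
case: (j \in S); case: (j \in JA A U); case: (j \in embedU U) => /=;
  by rewrite ?mul0r ?mul1r ?subrr ?subr0 ?sub0r ?F2opp.
Qed.

Lemma I23 c : mesym m 'F_2 2 = \sum_j c j *: theta_shift A j ->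
  exists S : {set 'I_n}, forall U : {set 'I_m},
    odd #|symdiff (JA A U) (embedU U) :&: S| = odd 'C(#|U|, 2).
Proof.
move=> Hc; exists [set j | c j == 1] => U.
apply: F2natb; rewrite -!F2nat -ev_mesym Hc evspan -sum_indZ.
apply: eq_bigr => j _; rewrite ev_tsh -tsh_ind; congr (_ * _).
by rewrite /ind inE; have [->|->] := F2cases (c j); rewrite ?F2_01 ?eqxx.
Qed.

Lemma I32 (S : {set 'I_n}) : (forall U : {set 'I_m},
    odd #|symdiff (JA A U) (embedU U) :&: S| = odd 'C(#|U|, 2)) ->
  mesym m 'F_2 2 = \sum_j ind S j *: theta_shift A j.
Proof.
move=> HS.
have H U : ev U (mesym m 'F_2 2) = ev U (\sum_j ind S j *: theta_shift A j).
  rewrite ev_mesym evspan F2nat -(HS U) -F2nat -sum_indZ.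
  by apply: eq_bigr => j _; rewrite ev_tsh tsh_ind.
apply: DET => //.
- exact: mesym_hom.
- exact: span_hom tsh_hom.
Qed.

End Prob2.

Unset Implicit Arguments.

Theorem mainTheorem7 (n : nat) (hn : (1 < n)%N) (hodd : odd n)
  (A : 'M[Kl]_(n.-1, n)) (hA : distinguished A) :
  [/\ ((exists x : {mpoly 'F_2[n.-1]},
          x \is ishomog1 1 (@mdeg n.-1) /\
          in_span (thetaA A) (x ^+ 2 + w2A A)) <->
       in_span (theta_shift A) (mesym n.-1 'F_2 2)),
      (in_span (theta_shift A) (mesym n.-1 'F_2 2) <->
       exists S : {set 'I_n}, forall U : {set 'I_n.-1},
         odd #|symdiff (JA A U) (embedU U) :&: S| = odd 'C(#|U|, 2))
    & ((exists S : {set 'I_n}, forall U : {set 'I_n.-1},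
         odd #|symdiff (JA A U) (embedU U) :&: S| = odd 'C(#|U|, 2)) <->
       (exists x : {mpoly 'F_2[n.-1]},
          x \is ishomog1 1 (@mdeg n.-1) /\
          in_span (thetaA A) (x ^+ 2 + w2A A)))].
Proof.
have h12 : (exists x : {mpoly 'F_2[n.-1]}, x \is ishomog1 1 (@mdeg n.-1) /\
          in_span (thetaA A) (x ^+ 2 + w2A A)) ->
       in_span (theta_shift A) (mesym n.-1 'F_2 2).
  move=> [x [Hx [c Hc]]]; exists c; exact: (I12 hA hodd Hx Hc).
have h21 : in_span (theta_shift A) (mesym n.-1 'F_2 2) ->
    (exists x : {mpoly 'F_2[n.-1]}, x \is ishomog1 1 (@mdeg n.-1) /\
          in_span (thetaA A) (x ^+ 2 + w2A A)).
  move=> [c Hc]; exact: (I21 hA hodd Hc).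
have h23 : in_span (theta_shift A) (mesym n.-1 'F_2 2) ->
    exists S : {set 'I_n}, forall U : {set 'I_n.-1},
         odd #|symdiff (JA A U) (embedU U) :&: S| = odd 'C(#|U|, 2).
  move=> [c Hc]; exact: (I23 Hc).
have h32 : (exists S : {set 'I_n}, forall U : {set 'I_n.-1},
         odd #|symdiff (JA A U) (embedU U) :&: S| = odd 'C(#|U|, 2)) ->
    in_span (theta_shift A) (mesym n.-1 'F_2 2).
  move=> [S HS]; exists (fun j => ind S j); exact: (I32 HS).
split; split; auto.
Qed.
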